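(* Let $d\ge2$, let $p,q\in\mathbb{H}^d$, and let $t$ be the highest point (maximal $z$-coordinate) on the geodesic segment $pq$. Let $C_t$ be the tile of $T^0$ containing $t$, and let $\pi_x(C_t)\subset\mathbb{R}^{d-1}$ be its projection to the $x$-coordinates. Then the Euclidean diameter of $\pi_x(C_t)$ is strictly greater than $\|x(p)-x(q)\|/4$.
   Context: Half-space model: points of $\mathbb{H}^d$ are $(x,z)\in\mathbb{R}^{d-1}\times\mathbb{R}_{>0}$; geodesics are vertical segments or arcs of Euclidean circles orthogonal to $\{z=0\}$. Binary tiling $T^0$: let $C_0$ be the Euclidean box $[0,\tfrac{1}{\sqrt{d-1}}]^{d-1}\times[1,2]$; the tiles of $T^0$ are the images of $C_0$ under $(x,z)\mapsto\sigma\cdot(x+\tau,z)$ for all $\tau=a/\sqrt{d-1}$, $a\in\mathbb{Z}^{d-1}$, and $\sigma=2^b$, $b\in\mathbb{Z}$. $\|\cdot\|$ is the Euclidean norm on $\mathbb{R}^{d-1}$. *)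

(* Defs.v *)
From HB Require Import structures.
From mathcomp Require Import all_boot all_order all_algebra.
From mathcomp Require Import all_classical reals.
Set Implicit Arguments. Unset Strict Implicit. Unset Printing Implicit Defensive.
Import Order.TTheory GRing.Theory Num.Theory.
Local Open Scope ring_scope.
Local Open Scope classical_set_scope.

Section Defs.
Variable R : realType.
Variable n : nat. (* n = d - 1 *)

Definition hpoint := ('rV[R]_n * R)%type.
Definition in_Hd (p : hpoint) : Prop := 0 < p.2.

Definition sqnorm (v : 'rV[R]_n) : R := \sum_(i < n) (v ord0 i) ^+ 2.
Definition enorm (v : 'rV[R]_n) : R := Num.sqrt (sqnorm v).

(* The geodesic segment pq in the half-space model:
   - if x(p) = x(q): the vertical Euclidean segment between p and q;
   - otherwise: the arc between p and q of the Euclidean circle through p, q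
     lying in the vertical plane containing p, q, with centre c on {z = 0}
     (i.e. orthogonal to {z=0}); along this arc the x-coordinate runs over the
     Euclidean segment [x(p), x(q)]. *)
Definition geodesic_segment (p q : hpoint) : set hpoint :=
  if p.1 == q.1 then
    [set u : hpoint | u.1 = p.1 /\ Num.min p.2 q.2 <= u.2 <= Num.max p.2 q.2]
  else
    [set u : hpoint | 0 < u.2 /\
      exists (s lam r : R), let c := p.1 + s *: (q.1 - p.1) in
        0 <= lam <= 1 /\ u.1 = p.1 + lam *: (q.1 - p.1) /\
        sqnorm (p.1 - c) + p.2 ^+ 2 = r ^+ 2 /\
        sqnorm (q.1 - c) + q.2 ^+ 2 = r ^+ 2 /\
        sqnorm (u.1 - c) + u.2 ^+ 2 = r ^+ 2].

(* Tiles of the binary tiling T^0: image of C_0 = [0,1/sqrt n]^n x [1,2]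
   under (x,z) |-> sigma (x + a/sqrt n, z), sigma = 2^b, a in Z^n, b in Z. *)
Definition tile (a : 'I_n -> int) (b : int) : set hpoint :=
  let sigma := (2%:R : R) ^ b in
  let s := Num.sqrt (n%:R : R) in
  [set u : hpoint | sigma <= u.2 <= sigma * 2%:R /\
           forall i : 'I_n, sigma * ((a i)%:~R / s) <= u.1 ord0 i
                            <= sigma * (((a i)%:~R + 1) / s)].

Definition is_tile (C : set hpoint) : Prop :=
  exists (a : 'I_n -> int) (b : int), C = tile a b.

Definition proj_x (C : set hpoint) : set 'rV[R]_n := fst @` C.

Definition ediam (A : set 'rV[R]_n) : R :=
  sup [set enorm (x - y) | x in A & y in A].

End Defs.

(* Main.v *)
Require Import Defs.
From HB Require Import structures.
From mathcomp Require Import all_boot all_order all_algebra.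
From mathcomp Require Import all_classical reals.
From mathcomp Require Import ring lra.
Import Order.TTheory GRing.Theory Num.Theory.
Local Open Scope ring_scope.
Local Open Scope classical_set_scope.

Section H.
Variable R : realType.
Variable n : nat.

Lemma sqnormZ (k : R) (v : 'rV[R]_n) : sqnorm (k *: v) = k ^+ 2 * sqnorm v.
Proof. rewrite /sqnorm mulr_sumr; apply: eq_bigr => i _; by rewrite mxE exprMn. Qed.

Lemma sqnorm_ge0 (v : 'rV[R]_n) : 0 <= sqnorm v.
Proof. rewrite /sqnorm; apply: sumr_ge0 => i _; exact: sqr_ge0. Qed.

Lemma sqnormB (v w : 'rV[R]_n) : sqnorm (v - w) = sqnorm (w - v).
Proof. by rewrite -opprB -scaleN1r sqnormZ sqrrN expr1n mul1r. Qed.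

Lemma vec_id1 (p q : 'rV[R]_n) (s : R) : p - (p + s *: (q - p)) = (- s) *: (q - p).
Proof. by rewrite opprD addrA subrr add0r scaleNr. Qed.

Lemma vec_id2 (p q : 'rV[R]_n) (s l : R) :
  (p + l *: (q - p)) - (p + s *: (q - p)) = (l - s) *: (q - p).
Proof. by apply/rowP => i; rewrite !mxE; ring. Qed.

Lemma vec_id3 (p q : 'rV[R]_n) : q = p + 1 *: (q - p).
Proof. by rewrite scale1r addrC subrK. Qed.

Lemma vec_id4 (p q : 'rV[R]_n) (s : R) : q - (p + s *: (q - p)) = (1 - s) *: (q - p).
Proof. by apply/rowP => i; rewrite !mxE; ring. Qed.

Lemma sqnorm0 : sqnorm (0 : 'rV[R]_n) = 0.
Proof. by rewrite /sqnorm big1 // => i _; rewrite mxE expr0n. Qed.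

Lemma key (p q t : hpoint R n) : in_Hd p -> in_Hd q -> geodesic_segment p q t ->
  (forall u, geodesic_segment p q u -> u.2 <= t.2) ->
  0 < t.2 /\ sqnorm (p.1 - q.1) < 4%:R * t.2 ^+ 2.
Proof.
rewrite /in_Hd => hp hq; rewrite /geodesic_segment; case: eqP => [E|NE] ht hmax.
  have tp : p.2 <= t.2.
    by apply: hmax; split => //; rewrite ge_min le_max !le_refl.
  rewrite E subrr sqnorm0; split; first lra.
  nra.
case: ht => t2pos [s [lam [r /= [/andP[l0 l1] [t1e [ep [eq' et]]]]]]].
rewrite vec_id1 sqnormZ in ep.
rewrite vec_id4 sqnormZ in eq'.
have D0 := sqnorm_ge0 (q.1 - p.1).
rewrite sqnormB.
set D := sqnorm (q.1 - p.1) in ep eq' D0 *.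
have tp : p.2 <= t.2.
  apply: hmax; split => //; exists s, 0, r. simpl. split; first by rewrite lexx ler01.
  by rewrite scale0r addr0 vec_id1 vec_id4 !sqnormZ; do !split.
have tq : q.2 <= t.2.
  apply: hmax; split => //; exists s, 1, r => /=; split; first by rewrite lexx ler01.
  by rewrite -vec_id3 vec_id1 vec_id4 !sqnormZ; do !split.
split; first lra.
have [s0|s0] := ltP s 0; first nra.
have [s1|s1] := ltP 1 s; first nra.
have r0 : 0 < r ^+ 2 by nra.
have tr : Num.sqrt (r ^+ 2) <= t.2.
  apply: (hmax (p.1 + s *: (q.1 - p.1), Num.sqrt (r ^+ 2))); split; first by rewrite sqrtr_gt0.
  exists s, s, r => /=; split; first by rewrite s0 s1.
  rewrite subrr sqnorm0 sqr_sqrtr ?add0r ?vec_id1 ?vec_id4 ?sqnormZ; last exact: ltW. by do !split.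
have tr2 : r ^+ 2 <= t.2 ^+ 2.
  have := sqr_sqrtr (ltW r0); have := sqrtr_ge0 (r ^+ 2); nra.
have [s2|s2] := ltP s (2%:R^-1); nra.
Qed.
Lemma box_bound (A B w u v : R) : B - A = w -> A <= u <= B -> A <= v <= B ->
  (u - v) ^+ 2 <= w ^+ 2.
Proof. move=> <- /andP[u1 u2] /andP[v1 v2]; nra. Qed.

Lemma tile_diam (a : 'I_n -> int) (b : int) : (0 < n)%N ->
  (2%:R : R) ^ b <= ediam (proj_x (tile a b)).
Proof.
move=> n0.
set sig := (2%:R : R) ^ b.
set s := Num.sqrt (n%:R : R).
have sig0 : 0 < sig by apply: exprz_gt0; rewrite ltr0n.
have s0 : 0 < s by rewrite sqrtr_gt0 ltr0n.
have s2 : s ^+ 2 = n%:R by rewrite sqr_sqrtr // ler0n.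
have wid : forall i, sig * (((a i)%:~R + 1) / s) - sig * ((a i)%:~R / s) = sig / s.
  by move=> i; field; exact: lt0r_neq0.
have sumc : \sum_(i < n) (sig / s) ^+ 2 = sig ^+ 2.
  rewrite sumr_const card_ord -mulr_natl -s2; field; exact: lt0r_neq0.
rewrite /ediam.
pose E : set R := [set enorm (x - y) | x in proj_x (tile a b) & y in proj_x (tile a b)].
have hub : has_ubound E.
  exists sig => _ [x [u tu ux] [y [v tv vy] <-]].
  case: tu => _ hu; case: tv => _ hv.
  have le : sqnorm (x - y) <= sig ^+ 2.
    rewrite -sumc /sqnorm; apply: ler_sum => i _; rewrite mxE !mxE.
    rewrite -ux -vy; apply: (box_bound _ _ _ _ _ (wid i)).
      exact: hu.
    exact: hv.
  rewrite /enorm -(ger0_norm (ltW sig0)) -sqrtr_sqr; exact: ler_wsqrtr.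
apply: (@ub_le_sup R E hub).
pose x0 : 'rV[R]_n := \row_i (sig * ((a i)%:~R / s)).
pose y0 : 'rV[R]_n := \row_i (sig * (((a i)%:~R + 1) / s)).
exists x0.
  exists (x0, sig) => //; split; first by rewrite lexx /= ler_peMr ?ler1n // ltW.
  by move=> i; rewrite /= mxE lexx /= ler_pM2l // ler_pM2r ?invr_gt0 // lerDl.
exists y0.
  exists (y0, sig) => //; split; first by rewrite lexx /= ler_peMr ?ler1n // ltW.
  by move=> i; rewrite /= mxE lexx /= andbT ler_pM2l // ler_pM2r ?invr_gt0 // lerDl.
have : sqnorm (x0 - y0) = sig ^+ 2.
  rewrite -sumc /sqnorm; apply: eq_bigr => i _; rewrite !mxE.
  by rewrite -sqrrN opprB wid.
rewrite /enorm => ->; rewrite sqrtr_sqr ger0_norm //; exact: ltW.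
Qed.
End H.

Theorem mainTheorem10 (R : realType) (d : nat) (hd : (2 <= d)%N)
    (p q t : hpoint R d.-1) (Ct : set (hpoint R d.-1)) :
  in_Hd p -> in_Hd q ->
  geodesic_segment p q t ->
  (forall u, geodesic_segment p q u -> u.2 <= t.2) ->
  is_tile Ct -> Ct t ->
  ediam (proj_x Ct) > enorm (p.1 - q.1) / 4%:R.
Proof.
move=> hp hq ht hmax [a [b ->]] hCt.
have [t0 tD] := @key _ _ p q t hp hq ht hmax.
have n0 : (0 < d.-1)%N by move: hd; case: (d) => [|[|k]].
have hdiam := @tile_diam R _ a b n0.
case: hCt => /andP[hs1 hs2] _.
have t20 : 0 < 2%:R * t.2 by rewrite mulr_gt0.
have he : enorm (p.1 - q.1) < 2%:R * t.2.
  rewrite /enorm -(ger0_norm (ltW t20)) -sqrtr_sqr ltr_sqrt; last by rewrite exprn_gt0.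
  nra.
lra.
Qed.
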